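(* Let $v\ge 2$ be an integer and let $\theta\in[0,1]$. Play the tipsy cop and drunken robber game on the complete graph $K_v$, with the cop and robber starting at distinct vertices. Then the probability that the robber remains free after $m$ moves is \[ P_m(K_v)=\theta^{\lfloor m/2\rfloor}\left(\frac{v-2}{v-1}\right)^m \qquad (m\ge 0). \]
   Context: Tipsy cop and drunken robber game on a finite connected graph $G$: a cop and a robber are placed at distinct vertices. Moves are numbered $1,2,3,\dots$; the robber makes the odd-numbered moves and the cop the even-numbered moves, and on each move the mover must move to a vertex adjacent to its current vertex (staying put is not allowed). The robber always moves to a neighbor chosen uniformly at random. The cop, independently at each of her moves, with probability $\theta$ moves to a neighbor chosen uniformly at random, and with probability $1-\theta$ makes a directed move to a neighbor lying on a shortest path to the robber's current vertex (in particular onto the robber's vertex if it is adjacent). All random choices are independent. The robber is captured (and the game ends) as soon as both occupy the same vertex, whether the robber moves onto the cop or the cop moves onto the robber. $P_m(G)$ denotes the probability that the robber has not been captured during the first $m$ moves ($P_0(G)=1$). *)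

(* Defs.v *)
From mathcomp Require Import all_boot all_order all_algebra.
Set Implicit Arguments. Unset Strict Implicit. Unset Printing Implicit Defensive.
Import Order.TTheory GRing.Theory Num.Theory.
Local Open Scope ring_scope.

Section Game.
Variables (R : realFieldType) (V : finType) (adj : rel V).

Definition nbhd (x : V) : {set V} := [set y | adj x y].
Definition deg (x : V) : nat := #|nbhd x|.

Fixpoint ball (k : nat) (x : V) : {set V} :=
  match k with
  | 0 => [set x]
  | k'.+1 => ball k' x :|: \bigcup_(z in ball k' x) nbhd z
  end.

(* graph distance (correct for connected graphs; distances are < #|V|) *)
Definition dist (x y : V) : nat :=
  find (fun k => y \in ball k x) (iota 0 #|V|).

Definition toward (c r : V) : {set V} :=
  [set y in nbhd c | (dist y r).+1 == dist c r].

Definition robber_step (r r' : V) : R :=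
  if adj r r' then (deg r)%:R^-1 else 0.

Definition cop_step (theta : R) (r c c' : V) : R :=
  theta * (if adj c c' then (deg c)%:R^-1 else 0)
  + (1 - theta) * (if c' \in toward c r then (#|toward c r|)%:R^-1 else 0).

(* surv theta c0 r0 m c r = probability that after the first m moves the
   robber has not been captured and the cop is at c, the robber at r.
   Move m+1 is a robber move iff m is even. Captured mass is discarded. *)
Fixpoint surv (theta : R) (c0 r0 : V) (m : nat) : V -> V -> R :=
  match m with
  | 0 => fun c r => if (c == c0) && (r == r0) then 1 else 0
  | m'.+1 =>
    let f := surv theta c0 r0 m' in
    if ~~ odd m' then
      fun c r => if c == r then 0 else \sum_(r1 : V) f c r1 * robber_step r1 r
    else
      fun c r => if c == r then 0 else \sum_(c1 : V) f c1 r * cop_step theta r c1 c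
  end.

Definition P_free (theta : R) (c0 r0 : V) (m : nat) : R :=
  \sum_(c : V) \sum_(r : V) surv theta c0 r0 m c r.

End Game.

Definition complete_adj (v : nat) : rel 'I_v := fun x y => x != y.

(* Main.v *)
Require Import Defs.
From mathcomp Require Import all_boot all_order all_algebra.
Import Order.TTheory GRing.Theory Num.Theory.
From mathcomp Require Import ring.
Local Open Scope ring_scope.

Section K.
Variables (R : realFieldType) (v : nat) (theta : R) (c0 r0 : 'I_v).
Hypothesis hv : (2 <= v)%N.
Hypothesis hcr : c0 != r0.

Let adj := @complete_adj v.
Let S m := @surv R _ adj theta c0 r0 m.
Let d : R := ((v - 1)%N%:R)^-1.
Let a : R := (v - 2)%N%:R / (v - 1)%N%:R.

Lemma deg_K x : @deg _ adj x = (v - 1)%N.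
Proof.
rewrite /deg /nbhd.
have -> : [set y | adj x y] = ~: [set x].
  by apply/setP => y; rewrite !inE /adj /complete_adj eq_sym.
by rewrite cardsC1 card_ord subn1.
Qed.

Lemma dist_K x y : @dist _ adj x y = (x != y) :> nat.
Proof.
rewrite /dist.
have -> : iota 0 #|'I_v| = [:: 0, 1 & iota 2 (v - 2)]%N.
  rewrite card_ord {1}(_ : v = (v - 2).+2)%N //.
  by rewrite -addn2 subnK.
rewrite /= !inE.
case: eqP => [->|ne] /=; first by rewrite eqxx.
have -> : y \in \bigcup_(z in [set x]) nbhd adj z.
  apply/bigcupP; exists x; rewrite !inE //.
  by rewrite /adj /complete_adj; apply/eqP => e; apply: ne.
by rewrite /=; case: (x =P y) => // e; case: ne.
Qed.

Lemma surv_diag m c : S m c c = 0.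
Proof.
case: m => [|m]; rewrite /S /=.
  by rewrite /S /=; have [->|] := eqVneq c c0; rewrite ?(negbTE hcr) ?andbF.
by case: ifP => _; rewrite eqxx.
Qed.

Lemma sum_helper x y : x != y ->
  \sum_(z : 'I_v) (if z == x then 0 else if y != z then d else 0) = a.
Proof.
move=> nxy.
rewrite (eq_bigr (fun z => if z \in ~: [set x; y] then d else 0)); last first.
  move=> z _; rewrite !inE negb_or; case: (z == x) => //=.
  by rewrite eq_sym.
rewrite -big_mkcond /= sumr_const.
have hc : #|~: [set x; y]| = (v - 2)%N.
  have := cardsC [set x; y]; rewrite cards2 nxy card_ord /=.
  move: (#|~: [set x; y]|) => k e.
  by rewrite -e addKn.
by rewrite hc -mulr_natl.

Qed.

Lemma step m : @P_free R _ adj theta c0 r0 m.+1 =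
  (if odd m then theta * a else a) * @P_free R _ adj theta c0 r0 m.
Proof.
rewrite /P_free /=.
case: ifP => hm.
- rewrite (negbTE hm) mulr_sumr; apply: eq_bigr => c _.
  rewrite mulr_sumr.
  have -> : \sum_(r : 'I_v) (if c == r then 0 else
       \sum_(r1 : 'I_v) surv adj theta c0 r0 m c r1 * robber_step R adj r1 r)
     = \sum_(r : 'I_v) \sum_(r1 : 'I_v) (if r == c then 0 else
          surv adj theta c0 r0 m c r1 * robber_step R adj r1 r).
    apply: eq_bigr => r _; rewrite eq_sym; case: eqP => _ //.
    by rewrite big1.
  rewrite exchange_big /=; apply: eq_bigr => r1 _.
  have -> : \sum_(i : 'I_v) (if i == c then 0 else
       surv adj theta c0 r0 m c r1 * robber_step R adj r1 i)
     = surv adj theta c0 r0 m c r1 * \sum_(i : 'I_v) (if i == c then 0 else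
           robber_step R adj r1 i).
    by rewrite mulr_sumr; apply: eq_bigr => i _; case: ifP; rewrite ?mulr0.
  case: (eqVneq c r1) => [<-|ne].
    by have := surv_diag m c; rewrite /S => ->; rewrite mul0r mulr0.
  rewrite mulrC; congr (_ * _).
  rewrite -(sum_helper _ _ ne); apply: eq_bigr => i _.
  by rewrite /robber_step deg_K.
- rewrite (negbFE hm).
  rewrite exchange_big [in RHS]exchange_big mulr_sumr; apply: eq_bigr => r _ /=.
  rewrite mulr_sumr.
  have -> : \sum_(c : 'I_v) (if c == r then 0 else
       \sum_(c1 : 'I_v) surv adj theta c0 r0 m c1 r * cop_step adj theta r c1 c)
     = \sum_(c : 'I_v) \sum_(c1 : 'I_v) (if c == r then 0 else
          surv adj theta c0 r0 m c1 r * cop_step adj theta r c1 c).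
    apply: eq_bigr => c _; case: eqP => _ //.
    by rewrite big1.
  rewrite exchange_big /=; apply: eq_bigr => c1 _.
  have -> : \sum_(i : 'I_v) (if i == r then 0 else
       surv adj theta c0 r0 m c1 r * cop_step adj theta r c1 i)
     = surv adj theta c0 r0 m c1 r * \sum_(i : 'I_v) (if i == r then 0 else
           cop_step adj theta r c1 i).
    by rewrite mulr_sumr; apply: eq_bigr => i _; case: ifP; rewrite ?mulr0.
  case: (eqVneq c1 r) => [->|ne].
    by have := surv_diag m r; rewrite /S => ->; rewrite mul0r mulr0.
  rewrite mulrC; congr (_ * _).
  have ne' : r != c1 by rewrite eq_sym.
  rewrite -(sum_helper _ _ ne') mulr_sumr; apply: eq_bigr => i _.
  case: eqP => ei; first by rewrite mulr0.
  rewrite /cop_step deg_K.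
  have -> : (i \in toward adj c1 r) = false.
    rewrite /toward !inE !dist_K ne.
    by have /eqP /negbTE -> := ei; rewrite /= andbF.
  rewrite mulr0 addr0 /adj /complete_adj.
  by case: (c1 != i); rewrite ?mulr0.
Qed.

End K.

Theorem mainTheorem1 (R : realFieldType) (v : nat) (theta : R)
  (c0 r0 : 'I_v) (m : nat) :
  (2 <= v)%N -> 0 <= theta <= 1 -> c0 != r0 ->
  @P_free R _ (@complete_adj v) theta c0 r0 m
  = theta ^+ (m./2) * (((v - 2)%N%:R / (v - 1)%N%:R) ^+ m).
Proof.
move=> hv _ hcr.
elim: m => [|m IH].
  rewrite /P_free /= expr0 expr0 mulr1.
  have -> : \sum_(c : 'I_v) \sum_(r : 'I_v)
      (if (c == c0) && (r == r0) then (1:R) else 0) = \sum_(c : 'I_v) (c == c0)%:R.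
    apply: eq_bigr => c _; rewrite (bigD1 r0) //= eqxx andbT big1 ?addr0.
      by case: (c == c0).
    by move=> r hr; rewrite (negbTE hr) andbF.
  rewrite (bigD1 c0) //= eqxx big1 ?addr0 // => c hc.
  by rewrite (negbTE hc).
rewrite step // IH.
have -> : m.+1./2 = (odd m + m./2)%N by rewrite -uphalf_half.
case: (odd m) => /=; rewrite exprS ?add0n ?add1n ?exprS; ring.
Qed.
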